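(* Let $r_2\geq 3$ be an odd integer. Then there is no graph with parameters $(r_2,r_3)$ for any integer $r_3$ with $\binom{r_2-1}{2}<r_3<\binom{r_2}{2}$. Moreover, $K_{r_2+1}$ has parameters $(r_2,\binom{r_2}{2})$ and $K_{r_2}\square K_2$ has parameters $(r_2,\binom{r_2-1}{2})$.
   Context: All graphs are finite, simple and undirected. The $K_3$-degree of a vertex $v$ is the number of triangles containing $v$. A graph $G$ has parameters $(r_2,r_3)$ if every vertex has degree $r_2$ and every vertex has $K_3$-degree $r_3$. $K_n$ is the complete graph on $n$ vertices. The Cartesian product $G_1\square G_2$ has vertex set $V(G_1)\times V(G_2)$, with $(u,v)$ and $(u',v')$ adjacent iff either $u=u'$ and $vv'\in E(G_2)$, or $v=v'$ and $uu'\in E(G_1)$. *)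

(* Defs.v *)
From mathcomp Require Import all_boot.
Set Implicit Arguments. Unset Strict Implicit. Unset Printing Implicit Defensive.

Definition simple_graph (T : finType) (e : rel T) : Prop :=
  symmetric e /\ irreflexive e.

Definition nbhd (T : finType) (e : rel T) (v : T) : {set T} := [set w | e v w].
Definition degree (T : finType) (e : rel T) (v : T) : nat := #|nbhd e v|.

(* K3-degree: number of triangles containing v, i.e. number of 2-subsets
   {x,y} of the neighbourhood of v with x ~ y. *)
Definition k3_degree (T : finType) (e : rel T) (v : T) : nat :=
  #|[set S : {set T} | [&& #|S| == 2, S \subset nbhd e v &
        [forall x in S, forall y in S, (x != y) ==> e x y]]]|.

Definition has_params (T : finType) (e : rel T) (r2 r3 : nat) : Prop :=
  forall v : T, degree e v = r2 /\ k3_degree e v = r3.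

Definition complete_rel (n : nat) : rel 'I_n := fun x y => x != y.

Definition cart_rel (T1 T2 : finType) (e1 : rel T1) (e2 : rel T2) : rel (T1 * T2) :=
  fun u v => ((u.1 == v.1) && e2 u.2 v.2) || ((u.2 == v.2) && e1 u.1 v.1).
Arguments complete_rel n : clear implicits.

(* Main.v *)
Require Import Defs.
From mathcomp Require Import all_boot.
From mathcomp Require Import zify.
Set Implicit Arguments. Unset Strict Implicit. Unset Printing Implicit Defensive.

Lemma card_sep (T : finType) (Y : {set T}) (P : pred T) :
  #|[set y in Y | P y]| = \sum_(y in Y) (P y : nat).
Proof.
rewrite -sum1_card (big_mkcond (fun y => y \in [set y in Y | P y])) /=.
rewrite [RHS]big_mkcond /=; apply: eq_bigr => y _.
by rewrite inE; case: (y \in Y); case: (P y).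
Qed.

Lemma dcount2 (T U : finType) (X : {set T}) (Y : {set U}) (r : T -> U -> bool) :
  \sum_(x in X) #|[set y in Y | r x y]| = \sum_(y in Y) #|[set x in X | r x y]|.
Proof.
under eq_bigr do rewrite card_sep.
rewrite exchange_big /=; apply: eq_bigr => y _; by rewrite card_sep.
Qed.

Lemma dcount (T : finType) (X Y : {set T}) (r : rel T) :
  \sum_(x in X) #|[set y in Y | r x y]| = \sum_(y in Y) #|[set x in X | r x y]|.
Proof.
under eq_bigr do rewrite card_sep.
rewrite exchange_big /=; apply: eq_bigr => y _; by rewrite card_sep.
Qed.

Section Gen.
Variables (T : finType) (e : rel T).
Hypothesis esym : symmetric e.
Hypothesis eirr : irreflexive e.

Local Notation N := (nbhd e).

Definition row (A : {set T}) a := #|[set b in A | (b != a) && ~~ e a b]|.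
Definition Q (A : {set T}) := \sum_(a in A) row A a.
Definition cross (B C : {set T}) := \sum_(b in B) #|[set c in C | ~~ e b c]|.
Definition Yv (u v : T) := [set w in N u | (w != v) && ~~ e v w].

Lemma disj_card (X Y Z : {set T}) : X :&: Y = set0 -> X :|: Y \subset Z ->
  #|X| + #|Y| <= #|Z|.
Proof.
move=> h1 h2; rewrite -cardsUI h1 cards0 addn0; exact: subset_leq_card.
Qed.

Lemma Q_split (A B : {set T}) : B \subset A ->
  Q B + 2 * cross B (A :\: B) <= Q A.
Proof.
move=> sBA; rewrite [Q A](big_setID B) /= (setIidPr sBA).
have h1 : \sum_(a in B) (row B a + #|[set c in A :\: B | ~~ e a c]|)
          <= \sum_(a in B) row A a.
  apply: leq_sum => a aB; apply: disj_card.
    apply/setP => c; rewrite !inE; apply/negP => /andP[/andP[cB _] /andP[/andP[cnB _] _]].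
    by rewrite cB in cnB.
  apply/subsetP => c; rewrite !inE => /orP[/andP[cB /andP[-> ->]]|/andP[/andP[cnB cA] ->]].
    by rewrite (subsetP sBA).
  rewrite cA andbT /=; apply: contraNneq cnB => ->; exact: aB.
have h2 : \sum_(a in A :\: B) #|[set b in B | ~~ e a b]| <= \sum_(a in A :\: B) row A a.
  apply: leq_sum => a; rewrite !inE => /andP[anB aA]; apply: subset_leq_card.
  apply/subsetP => b; rewrite !inE => /andP[bB ->]; rewrite (subsetP sBA) // andbT /=.
  by apply: contraNneq anB => <-.
have h3 : \sum_(a in A :\: B) #|[set b in B | ~~ e a b]| = cross B (A :\: B).
  rewrite /cross dcount; apply: eq_bigr => b _; apply: eq_card => c; by rewrite !inE esym.
rewrite big_split /= in h1; rewrite /cross /Q in h3 *; lia.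
Qed.

Definition E2 (A : {set T}) := [set S : {set T} | [&& #|S| == 2, S \subset A &
        [forall x in S, forall y in S, (x != y) ==> e x y]]].

Lemma row_compl (A : {set T}) a : a \in A ->
  row A a + #|[set b in A | (b != a) && e a b]| = #|A|.-1.
Proof.
move=> aA; rewrite /row (cardsD1 a A) aA add1n succnK -(cardsID [set b | e a b] (A :\ a)) [RHS]addnC.
congr (_ + _); apply: eq_card => b; rewrite !inE; do ?case: (_ \in _); do ?case: (_ == _);
  by case: (e a b).
Qed.

Lemma row_E2 (A : {set T}) a : a \in A ->
  #|[set b in A | (b != a) && e a b]| = #|[set S in E2 A | a \in S]|.
Proof.
move=> aA.
have inj : {in [set b in A | (b != a) && e a b] &, injective (fun b => [set a; b])}.
  move=> b b'; rewrite !inE => /andP[_ /andP[ba _]] _ eqS.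
  have : b \in [set a; b'] by rewrite -eqS !inE eqxx orbT.
  by rewrite !inE (negbTE ba) => /eqP.
rewrite -(card_in_imset inj); apply: eq_card => S; rewrite !inE.
apply/imsetP/idP.
  case=> b; rewrite !inE => /andP[bA /andP[ba eab]] ->.
  rewrite cards2 (eq_sym a b) ba /= !inE eqxx andbT.
  apply/andP; split.
    by apply/subsetP => x; rewrite !inE => /orP[]/eqP->.
  apply/forallP => x; apply/implyP => xS; apply/forallP => y; apply/implyP => yS.
  apply/implyP => xy; move: xS yS xy; rewrite !inE.
  by move=> /orP[]/eqP-> /orP[]/eqP->; rewrite ?eqxx // esym.
move=> /andP[/and3P[/cards2P[x [y [xy ->]]] sub fa] aS].
have xA : x \in A by rewrite (subsetP sub) // !inE eqxx.
have yA : y \in A by rewrite (subsetP sub) // !inE eqxx orbT.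
have exy : e x y.
  move/forallP: fa => /(_ x); rewrite !inE eqxx /= => /forallP/(_ y).
  by rewrite !inE eqxx orbT /= xy.
move: aS; rewrite !inE => /orP[]/eqP ea; subst a.
  exists y; last by [].
  by rewrite !inE yA eq_sym xy.
exists x; last by rewrite setUC.
by rewrite !inE xA xy esym.
Qed.

Lemma Q_E2 (A : {set T}) : Q A + 2 * #|E2 A| = #|A| * #|A|.-1.
Proof.
have h : \sum_(a in A) #|[set b in A | (b != a) && e a b]| = 2 * #|E2 A|.
  under eq_bigr => a aA do rewrite row_E2 //.
  rewrite (dcount2 A (E2 A) (fun a S => a \in S)) mulnC -sum_nat_const; apply: eq_bigr => S; rewrite inE => /and3P[/eqP c2 sub _].
  rewrite -c2; apply: eq_card => x; rewrite !inE; apply/andP/idP => [[]//|xS].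
  by rewrite (subsetP sub).
rewrite -h /Q -big_split /= -sum_nat_const; apply: eq_bigr => a aA; exact: row_compl.
Qed.

Lemma Nu_split u v : e v u -> #|N u| = 1 + (#|N u :&: N v| + #|Yv u v|).
Proof.
move=> evu.
  rewrite (cardsD1 v (N u)) {1}/nbhd inE esym evu -(cardsID (N v) (N u :\ v)).
  congr (1 + (_ + _)); apply: eq_card => w; rewrite !inE.
    by case: eqP => [->|_]; rewrite ?eirr ?andbF.
  by case: (e v w); case: (w != v); case: (e u w).
Qed.

Lemma Y_row u v : e v u -> #|N u| = #|N v| -> #|Yv u v| = row (N v) u.
Proof.
move=> evu hd.
have h1 := Nu_split evu.
have h2 : #|N v| = 1 + (#|N u :&: N v| + row (N v) u).
  rewrite (cardsD1 u (N v)) {1}/nbhd inE evu -(cardsID (N u) (N v :\ u)).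
  congr (1 + (_ + _)); apply: eq_card => w; rewrite !inE.
    by case: eqP => [->|_]; rewrite ?eirr ?andbF // andbC.
  by case: (e v w); case: (w != u); case: (e u w).
lia.
Qed.

Lemma row_split (S M : {set T}) u : M \subset S -> u \in M ->
  row S u = row M u + #|[set c in S :\: M | ~~ e u c]|.
Proof.
move=> sMS uM; rewrite /row -(cardsID M [set b in S | (b != u) && ~~ e u b]).
congr (_ + _); apply: eq_card => w; rewrite !inE.
  case wM : (w \in M); rewrite ?andbF ?andbT //. by rewrite (subsetP sMS).
case wM : (w \in M) => //=; case: eqP => [wu|//]; by rewrite wu uM in wM.
Qed.

Lemma sum_row_split (S M : {set T}) : M \subset S ->
  \sum_(u in M) row S u = Q M + cross M (S :\: M).
Proof.
move=> sMS; rewrite /Q /cross -big_split /=; apply: eq_bigr => u uM; exact: row_split.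
Qed.

Lemma row_pair a b : a != b -> ~~ e a b -> row [set a; b] a = 1.
Proof.
move=> ab nab; rewrite /row -(cards1 b); apply: eq_card => c; rewrite !inE.
case: (eqVneq c b) => [->|cb]; first by rewrite orbT eq_sym ab nab.
rewrite orbF; by case: (c == a).
Qed.

Lemma Q_pair v t : v != t -> ~~ e v t -> Q [set v; t] = 2.
Proof.
move=> vt nvt; rewrite /Q big_setU1 ?inE //= big_set1 row_pair //.
by rewrite setUC row_pair // 1?eq_sym // esym.
Qed.

Lemma main_contra k q r3 : odd k -> 0 < #|T| -> (forall x, #|N x| = k) ->
  (forall x, Q (N x) = q) -> q + 2 * r3 = k * k.-1 -> 0 < q -> q + 2 < 2 * k -> False.
Proof.
move=> oddk Tn0 deg Qc qr q0 qlt.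
case/card_gt0P: Tn0 => v _.
set S := N v.
have evS : forall w, (w \in S) = e v w by move=> w; rewrite inE.
have [u0 u0S r0] : exists2 u0, u0 \in S & 0 < row S u0.
  case: (boolP [exists u in S, 0 < row S u]) => [/exists_inP [u ? ?]|/exists_inPn H].
    by exists u.
  have : Q S = 0 by apply: big1 => u uS; move: (H u uS); rewrite -leqNgt leqn0 => /eqP.
  by rewrite Qc => q0'; rewrite q0' in q0.
have Yrow : forall u, u \in S -> #|Yv u v| = row S u.
  by move=> u uS; apply: Y_row; rewrite ?deg // -evS.
case: (boolP [exists t, [&& t != v, ~~ e v t, 0 < #|N t :&: S| & #|N t :&: S| < k]]).
  case/existsP => t /and4P[tv nvt mu0 muk].
  set M := N t :&: S.
  have ntv : ~~ e t v by rewrite esym.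
  case: (eqVneq #|M| 1) => [/eqP/cards1P [u Mu]|mu1].
    have uMM : u \in M by rewrite Mu inE.
    have uS : u \in S by move: uMM; rewrite inE => /andP[].
    have etu : e t u by move: uMM; rewrite !inE => /andP[].
    have evu : e v u by rewrite -evS.
    have sB : [set v; t] \subset N u.
      by apply/subsetP => x; rewrite !inE => /orP[]/eqP->; rewrite esym.
    have hq := Q_split sB; rewrite Qc Q_pair 1?eq_sym // in hq.
    have tY : t \in Yv u v by rewrite !inE esym etu tv nvt.
    have c1 : #|Yv u v :\ t| <= #|[set c in N u :\: [set v; t] | ~~ e v c]|.
      apply: subset_leq_card; apply/subsetP => c; rewrite !inE.
      by move=> /and4P[ct -> cv ->]; rewrite negb_or cv ct.
    have c2 : #|N u :&: S| <= #|[set c in N u :\: [set v; t] | ~~ e t c]|.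
      apply: subset_leq_card; apply/subsetP => c; rewrite !inE => /andP[euc evc].
      rewrite euc andbT negb_or -andbA; apply/and3P; split.
      - by apply: contraTneq evc => ->; rewrite eirr.
      - by apply: contraNneq nvt => <-.
      - apply/negP => etc; have : c \in M by rewrite !inE etc evc.
        rewrite Mu inE => /eqP cu; by rewrite cu eirr in euc.
    have hs := Nu_split evu; rewrite deg -/S in hs.
    have hY := cardsD1 t (Yv u v); rewrite tY in hY.
    move: hq; rewrite /cross big_setU1; last by rewrite inE eq_sym.
    rewrite big_set1 /= => hq.
    simpl in hY. lia.
  have sMt : M \subset N t by apply: subsetIl.
  have sMS : M \subset S by apply: subsetIr.
  have h1 := Q_split sMt; have h2 := Q_split sMS.
  rewrite Qc in h1; rewrite /S Qc -/S in h2.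
  have h3 := sum_row_split sMS.
  have hR : #|N t :\: M| = k - #|M|.
    have := cardsID M (N t); rewrite deg.
    have -> : N t :&: M = M by rewrite /M setIA setIid.
    lia.
  have h4 : forall u, u \in M ->
      k - #|M| + 1 <= #|[set c in N t :\: M | ~~ e u c]| + row S u.
    move=> u uM.
    have uS : u \in S by apply: (subsetP sMS).
    have etu : e t u by move: uM; rewrite !inE => /andP[].
    have tY : t \in Yv u v by rewrite !inE esym etu tv nvt.
    have hY := cardsD1 t (Yv u v); rewrite tY Yrow // in hY.
    have hs := cardsID (N u) (N t :\: M).
    have e1 : #|(N t :\: M) :\: N u| = #|[set c in N t :\: M | ~~ e u c]|.
      apply: eq_card => c; rewrite !inE; by case: (e u c); case: (e t c); case: (e v c).
    have e2 : #|(N t :\: M) :&: N u| <= #|Yv u v :\ t|.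
      apply: subset_leq_card; apply/subsetP => c; rewrite !inE.
      move=> /andP[/andP[cM etc] euc]; rewrite euc /=.
      have nvc : ~~ e v c by move: cM; rewrite etc /=.
      rewrite nvc andbT; apply/andP; split.
        by apply: contraTneq etc => ->; rewrite eirr.
      by apply: contraNneq ntv => <-.
    lia.
  have h5 : \sum_(u in M) (k - #|M| + 1) <=
            \sum_(u in M) (#|[set c in N t :\: M | ~~ e u c]| + row S u).
    by apply: leq_sum.
  rewrite sum_nat_const [X in _ <= X]big_split /= h3 in h5.
  rewrite /cross in h1 h2 h3 h5.
  have hq : #|M| * (k - #|M| + 1) <= q.
    move: h5; set P := #|M| * _; move=> h5; lia.
  have mu2 : 2 <= #|M| by move: mu1 mu0; case: #|M| => [|[|n]].
  move: hq mu2 muk qlt; set mu := #|M|; move=> hq mu2 muk qlt.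
  have [b hb] : exists b, mu = b.+2 by exists (mu - 2); lia.
  have [c hc] : exists c, k = mu + c.+1 by exists (k - mu).-1; lia.
  have hd : k - mu + 1 = c.+2 by lia.
  rewrite hd in hq; rewrite hc hb in qlt; rewrite hb in hq.
  have ex : b.+2 * c.+2 = b * c + 2 * b + 2 * c + 4.
    rewrite !mulSn !mulnS; lia.
  rewrite ex in hq; lia.
move=> /existsPn HB.
have sub : forall u u', u \in S -> u' \in S -> Yv u v \subset Yv u' v.
  move=> u u' uS u'S; apply/subsetP => w; rewrite !inE => /and3P[euw wv nvw].
  rewrite wv nvw andbT /=.
  have uM : u \in N w :&: S by rewrite !inE esym euw -evS.
  have mpos : 0 < #|N w :&: S| by apply/card_gt0P; exists u.
  move: (HB w); rewrite wv nvw mpos /= -leqNgt => kle.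
  have : N w :&: S = S.
    apply/eqP; rewrite eqEcard subsetIr /= /S deg; apply: leq_trans kle _; by [].
  move=> eqS; have : u' \in N w :&: S by rewrite eqS.
  by rewrite !inE andbT => /andP[h _]; rewrite esym.
have rc : forall u, u \in S -> row S u = row S u0.
  move=> u uS; rewrite -!Yrow //; apply/eqP; rewrite eqn_leq !subset_leq_card //; exact: sub.
have : q = k * row S u0.
  rewrite -(Qc v) /Q -/S (eq_bigr _ rc) sum_nat_const /S deg //.
move=> qk.
have y1 : row S u0 = 1.
  case: (leqP 2 (row S u0)) => h; last lia.
  have : k * 2 <= k * row S u0 by rewrite leq_mul2l h orbT.
  lia.
rewrite y1 muln1 in qk.
move: oddk qr; rewrite qk; move: (odd_double_half k) => hk.
case: (odd k) hk => // hk _; set j := k./2 in hk.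
have -> : k = (j.*2).+1 by lia.
rewrite -!mul2n /=. move=> h. have : odd ((2 * j).+1 + 2 * r3) = odd ((2 * j).+1 * (2 * j)).
  by rewrite h.
by rewrite oddD oddM /= !oddM /= andbF.
Qed.

End Gen.
Lemma I2_other (i j j' : 'I_2) : j != i -> j' != i -> j = j'.
Proof.
move=> h1 h2; apply/val_inj; move: h1 h2; rewrite -!val_eqE /=.
have := ltn_ord i; have := ltn_ord j; have := ltn_ord j'; lia.
Qed.

Lemma complete_params r2 : has_params (complete_rel r2.+1) r2 'C(r2, 2).
Proof.
move=> v.
have hN : nbhd (complete_rel r2.+1) v = [set~ v].
  by apply/setP => w; rewrite !inE /complete_rel eq_sym.
have hd : degree (complete_rel r2.+1) v = r2 by rewrite /degree hN cardsC1 card_ord.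
split => //.
have -> : 'C(r2, 2) = 'C(#|nbhd (complete_rel r2.+1) v|, 2) by rewrite -[in LHS]hd.
rewrite /k3_degree -cards_draws; apply: eq_card => S; rewrite !inE.
have fa : [forall x in S, forall y in S, (x != y) ==> complete_rel r2.+1 x y].
  apply/forallP => x; apply/implyP => _; apply/forallP => y; apply/implyP => _; exact/implyP.
by rewrite fa andbT andbC.
Qed.

Lemma cart_params r2 : 0 < r2 ->
  has_params (cart_rel (complete_rel r2) (complete_rel 2)) r2 'C(r2.-1, 2).
Proof.
move=> r2p [a i].
set e := cart_rel _ _.
set N' := [set p : 'I_r2 * 'I_2 | (p.2 == i) && (p.1 != a)].
set N1 := [set p : 'I_r2 * 'I_2 | (p.1 == a) && (p.2 != i)].
have hN : nbhd e (a, i) = N1 :|: N'.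
  apply/setP => [[b j]]; rewrite !inE /e /cart_rel /complete_rel /=.
  by rewrite (eq_sym a b) (eq_sym i j) orbC.
have cN' : #|N'| = r2.-1.
  have -> : N' = [set (b, i) | b in [set~ a]].
    apply/setP => [[b j]]; rewrite !inE /=; apply/andP/imsetP.
      by move=> [/eqP -> ba]; exists b; rewrite ?inE.
    by case=> b'; rewrite !inE => ba [-> ->]; split; rewrite ?eqxx.
  rewrite card_imset ?cardsC1 ?card_ord //; by move=> x y [].
have cN1 : #|N1| = 1.
  have -> : N1 = [set (a, j) | j in [set~ i]].
    apply/setP => [[b j]]; rewrite !inE /=; apply/andP/imsetP.
      by move=> [/eqP -> ji]; exists j; rewrite ?inE.
    by case=> j'; rewrite !inE => ji [-> ->]; split; rewrite ?eqxx.
  rewrite card_imset ?cardsC1 ?card_ord //; by move=> x y [].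
have hdisj : N1 :&: N' = set0.
  apply/setP => [[b j]]; rewrite !inE /=.
  by case: (j == i); case: (b == a).
split.
  rewrite /degree hN; have := cardsUI N1 N'; rewrite hdisj cards0 cN1 cN'; lia.
rewrite /k3_degree -cN' -cards_draws; apply: eq_card => S; rewrite !inE.
have adjN' : forall x y, x \in N' -> y \in N' -> x != y -> e x y.
  move=> [b j] [b' j']; rewrite !inE /= => /andP[/eqP -> _] /andP[/eqP -> _] neq.
  rewrite /e /cart_rel /complete_rel /= eqxx /=; apply/orP; right.
  by apply: contraNneq neq => ->.
apply/idP/idP.
  case/and3P => c2 sub fa; rewrite c2 andbT.
  apply/subsetP => x xS.
  have [y yS yx] : exists2 y, y \in S & y != x.
    case/cards2P: c2 => [x0 [y0 [xy eS]]]; move: xS; rewrite eS !inE => /orP[]/eqP->.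
      by exists y0; rewrite ?inE ?eqxx ?orbT // eq_sym.
    by exists x0; rewrite ?inE ?eqxx.
  have exy : e x y.
    by move/forallP: fa => /(_ x); rewrite xS /= => /forallP/(_ y); rewrite yS eq_sym yx.
  have := subsetP sub x xS; have := subsetP sub y yS; rewrite hN !inE.
  move: exy yx; case: x {xS} => [b j]; case: y {yS} => [b' j'].
  rewrite /e /cart_rel /complete_rel /= => exy yx.
  case/orP => /andP[h1 h2]; case/orP => /andP[h3 h4] //.
    exfalso; move: yx; rewrite (eqP h1) (eqP h3) (I2_other h2 h4) eqxx //.
  exfalso; move: exy; rewrite (eqP h3) (eqP h1) eq_sym (negbTE h2) /=.
  by rewrite (negbTE h4).
case/andP => sub c2; rewrite c2 /=; apply/andP; split.
  by rewrite hN; apply: subset_trans sub (subsetUr _ _).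
apply/forallP => x; apply/implyP => xS; apply/forallP => y; apply/implyP => yS.
apply/implyP => xy; apply: adjN' => //; exact: (subsetP sub).
Qed.

Theorem corollary5p2 (r2 : nat) (Hodd : odd r2) (H3 : 3 <= r2) :
  (forall (r3 : nat), 'C(r2.-1, 2) < r3 < 'C(r2, 2) ->
     forall (T : finType) (e : rel T), 0 < #|T| -> simple_graph e ->
       ~ has_params e r2 r3)
  /\ has_params (complete_rel r2.+1) r2 'C(r2, 2)
  /\ has_params (cart_rel (complete_rel r2) (complete_rel 2)) r2 'C(r2.-1, 2).
Proof.
split; last split; [ | exact: complete_params | apply: cart_params; lia].
move=> r3 /andP[lo hi] T e HT [esym eirr] hp.
have deg : forall x, #|nbhd e x| = r2 by move=> x; case: (hp x).
have k3 : forall x, k3_degree e x = r3 by move=> x; case: (hp x).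
have hQ : forall x, Q e (nbhd e x) = r2 * r2.-1 - 2 * r3.
  move=> x; have := Q_E2 esym (nbhd e x); rewrite deg.
  have -> : #|E2 e (nbhd e x)| = r3 by rewrite -(k3 x).
  move=> h; rewrite -h; lia.
have b1 := mul_bin_diag r2 1; rewrite bin1 in b1.
have b2 : 'C(r2, 2) = 'C(r2.-1, 2) + r2.-1.
  by case: r2 {Hodd H3 deg hQ hp lo hi b1} => [|p] //=; rewrite binS bin1.
move: b1 b2 hQ lo hi; set P := r2 * r2.-1; set c := 'C(r2.-1, 2); set C := 'C(r2, 2).
move=> b1 b2 hQ lo hi.
apply: (main_contra esym eirr Hodd HT deg hQ (r3 := r3)); lia.
Qed.
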